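(* Let $G$ be a simple stochastic game, $A$ a set of arcs of $G$, and $\sigma,\sigma'$ two positional MAX strategies such that $\sigma' \succ_{G[A,\sigma]} \sigma$. Then $Z(\sigma')\subseteq Z(\sigma)$, where absorbing sets are taken in $G$.
   Context: A simple stochastic game (SSG) $G$ is a finite directed graph whose vertex set $V$ is partitioned into MAX vertices, MIN vertices, random vertices and a nonempty set $V_S$ of sinks; every non-sink vertex has at least one outgoing arc, every sink has exactly one outgoing arc, a self-loop; each random vertex $x$ carries a rational probability distribution $p_x$ on its out-neighbourhood, positive on every out-neighbour; each sink $s$ has rational value $\mathrm{Val}(s)\in[0,1]$. A positional MAX (resp. MIN) strategy assigns to each MAX (resp. MIN) vertex one of its out-neighbours. Under $\sigma,\tau$ from start $x_0$, the random play moves from MAX vertex $x$ to $\sigma(x)$, from MIN vertex $x$ to $\tau(x)$, from random vertex $x$ to an out-neighbour drawn by $p_x$ independently, and stays at a sink once reached; its value is $\mathrm{Val}(s)$ if it reaches sink $s$, else $0$, and $v^G_{\sigma,\tau}(x_0)$ is its expectation. $v^G_\sigma:=v^G_{\sigma,\tau}$ for a best response $\tau$, i.e. a MIN strategy with $v_{\sigma,\tau}\le v_{\sigma,\tau'}$ pointwise for all MIN strategies $\tau'$ (a positional one exists). Vectors are compared pointwise; $v>v'$ means $v\ge v'$ and $v\ne v'$. We write $\sigma'\succ_H\sigma$ (in a game $H$) if $v^H_{\sigma'}>v^H_\sigma$ and, for every MAX vertex $x$ with $v^H_{\sigma'}(x)=v^H_\sigma(x)$, $\sigma'(x)=\sigma(x)$.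 Transformed game: $G[A,\sigma]$ is obtained from a copy of $G$ by replacing each arc $e=(x,y)\in A$ by an arc $(x,s_e)$ to a new sink $s_e$ of value $v^G_\sigma(y)$ (for random $x$, $p_x(s_e)=p_x(y)$); $y$ is kept. Strategies of $G$ and $G[A,\sigma]$ are identified, and value vectors of $G[A,\sigma]$ are compared only on vertices of $G$. Absorbing sets: an absorbing set for $(\sigma,\tau)$ is a set $Z\subseteq V\setminus V_S$ such that from any vertex of $Z$, playing $(\sigma,\tau)$, the probability of reaching $V\setminus Z$ is zero; $Z(\sigma,\tau)$ is the union of all absorbing sets for $(\sigma,\tau)$; and $Z(\sigma)$ is the inclusion-wise largest of the sets $Z(\sigma,\tau)$ over positional MIN strategies $\tau$ (it exists and equals $Z(\sigma,\tau)$ for some positional best response $\tau$ to $\sigma$). *)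

(* Defs.v *)
From HB Require Import structures.
From mathcomp Require Import all_boot all_order all_algebra.
From mathcomp Require Import all_classical all_reals all_analysis.
Set Implicit Arguments. Unset Strict Implicit. Unset Printing Implicit Defensive.
Import Order.TTheory GRing.Theory Num.Theory.
Import numFieldNormedType.Exports.
Local Open Scope ring_scope.

Inductive vkind := Vmax | Vmin | Vrand | Vsink.

Definition is_max k := if k is Vmax then true else false.
Definition is_min k := if k is Vmin then true else false.
Definition is_rand k := if k is Vrand then true else false.
Definition is_sink k := if k is Vsink then true else false.

Record ssg (R : realType) (V : finType) := SSG {
  vk : V -> vkind;
  garc : rel V;
  gprob : V -> V -> R;
  sinkval : V -> R
}.
Arguments SSG {R V}.

Section Games.
Variables (R : realType) (V : finType).
Implicit Types (G : ssg R V).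

Definition sinks G : {set V} := [set x | is_sink (vk G x)].

Definition ssg_wf G : Prop :=
  [/\ (exists s, is_sink (vk G s)),
      (forall x, ~~ is_sink (vk G x) -> exists y, garc G x y),
      (forall s y, is_sink (vk G s) -> (garc G s y <-> y = s)),
      (forall x, is_rand (vk G x) ->
         [/\ forall y, garc G x y -> 0 < gprob G x y,
             forall y, ~~ garc G x y -> gprob G x y = 0 &
             \sum_(y : V) gprob G x y = 1])
    & (forall s, is_sink (vk G s) -> 0 <= sinkval G s <= 1)].

Definition ssg_rational G : Prop :=
  (forall x y, is_rand (vk G x) -> exists q : rat, gprob G x y = ratr q) /\
  (forall s, is_sink (vk G s) -> exists q : rat, sinkval G s = ratr q).

(* Positional strategies are functions V -> V; only their values at MAX
   (resp. MIN) vertices matter. *)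
Definition max_strategy G (sigma : {ffun V -> V}) : bool :=
  [forall x, is_max (vk G x) ==> garc G x (sigma x)].
Definition min_strategy G (tau : {ffun V -> V}) : bool :=
  [forall x, is_min (vk G x) ==> garc G x (tau x)].

Definition trans G (sigma tau : {ffun V -> V}) (x y : V) : R :=
  match vk G x with
  | Vmax => (sigma x == y)%:R
  | Vmin => (tau x == y)%:R
  | Vrand => gprob G x y
  | Vsink => (x == y)%:R
  end.

(* hval n x = expected value of the play after n steps
   (Val(s) if a sink s has been reached by then, 0 otherwise). *)
Fixpoint hval G (sigma tau : {ffun V -> V}) (n : nat) : V -> R :=
  fun x =>
  match n with
  | 0 => if is_sink (vk G x) then sinkval G x else 0
  | n'.+1 => if is_sink (vk G x) then sinkval G x
             else \sum_(y : V) trans G sigma tau x y * hval G sigma tau n' y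
  end.

Definition vals G (sigma tau : {ffun V -> V}) (x : V) : R :=
  limn (fun n => hval G sigma tau n x).

Definition best_response G (sigma tau : {ffun V -> V}) : bool :=
  min_strategy G tau &&
  [forall tau' : {ffun V -> V}, min_strategy G tau' ==>
     [forall x, vals G sigma tau x <= vals G sigma tau' x]].

Definition vsig G (sigma : {ffun V -> V}) (x : V) : R :=
  match [pick tau | best_response G sigma tau] with
  | Some tau => vals G sigma tau x
  | None => 0
  end.

Fixpoint rprob G (sigma tau : {ffun V -> V}) (T : {set V}) (n : nat) : V -> R :=
  fun x =>
  match n with
  | 0 => (x \in T)%:R
  | n'.+1 => if x \in T then 1
             else \sum_(y : V) trans G sigma tau x y * rprob G sigma tau T n' y
  end.

Definition reach_prob G (sigma tau : {ffun V -> V}) (T : {set V}) (x : V) : R :=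
  limn (fun n => rprob G sigma tau T n x).

Definition absorbing G (sigma tau : {ffun V -> V}) (Z : {set V}) : bool :=
  (Z \subset ~: sinks G) &&
  [forall x in Z, reach_prob G sigma tau (~: Z) x == 0].

Definition Zst G (sigma tau : {ffun V -> V}) : {set V} :=
  \bigcup_(Z | absorbing G sigma tau Z) Z.

Definition Zsig G (sigma : {ffun V -> V}) : {set V} :=
  match [pick tau | min_strategy G tau &&
           [forall tau' : {ffun V -> V}, min_strategy G tau' ==>
              (Zst G sigma tau' \subset Zst G sigma tau)]] with
  | Some tau => Zst G sigma tau
  | None => finset.set0
  end.

End Games.

Section Transform.
Variables (R : realType) (V : finType).
Variables (G : ssg R V) (A : {set V * V}) (sigma0 : {ffun V -> V}).

(* Vertices: those of G (inl) plus one new sink s_e per garc e in A (inr). *)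
Definition tV : finType := (V + {e : V * V | e \in A})%type.

Definition tvk (z : tV) : vkind :=
  match z with inl x => vk G x | inr _ => Vsink end.

Definition tarc (z w : tV) : bool :=
  match z, w with
  | inl x, inl y => garc G x y && ((x, y) \notin A)
  | inl x, inr e => ((val e).1 == x) && garc G x (val e).2
  | inr e, w => w == inr e
  end.

Definition tprob (z w : tV) : R :=
  match z, w with
  | inl x, inl y => if (x, y) \in A then 0 else gprob G x y
  | inl x, inr e => if (val e).1 == x then gprob G x (val e).2 else 0
  | inr _, _ => 0
  end.

Definition tsval (z : tV) : R :=
  match z with
  | inl x => sinkval G x
  | inr e => vsig G sigma0 (val e).2
  end.

Definition transformed : ssg R tV := SSG tvk tarc tprob tsval.

(* Identification of a strategy of G with a strategy of G[A, sigma0]: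
   choosing y at x becomes choosing s_(x,y) when (x,y) is in A. *)
Definition lift_strat (s : {ffun V -> V}) : {ffun tV -> tV} :=
  [ffun z : tV => match z with
    | inl x => match @insub (V * V) (fun e => e \in A) _ (x, s x) with
               | Some e => inr e
               | None => inl (s x)
               end
    | inr e => inr e
    end].

End Transform.

Section Succ.
Variables (R : realType) (V : finType).
Implicit Types (G : ssg R V).

(* sigma' \succ_{G[A,sigma]} sigma, value vectors of G[A,sigma] being
   compared on the vertices of G only. *)
Definition succ_transformed G (A : {set V * V}) (sigma sigma' : {ffun V -> V}) : Prop :=
  let H := transformed G A sigma in
  let v' := vsig H (lift_strat A sigma') in
  let v := vsig H (lift_strat A sigma) in
  [/\ (forall x : V, v (inl x) <= v' (inl x)),
      (exists x : V, v (inl x) != v' (inl x)) &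
      (forall x : V, is_max (vk H (inl x)) -> v' (inl x) = v (inl x) ->
         lift_strat A sigma' (inl x) = lift_strat A sigma (inl x))].

End Succ.

(* Main.v *)
Require Import Defs.
From HB Require Import structures.
From mathcomp Require Import all_boot all_order all_algebra.
From mathcomp Require Import all_classical all_reals all_analysis.
Set Implicit Arguments. Unset Strict Implicit. Unset Printing Implicit Defensive.
Import Order.TTheory GRing.Theory Num.Theory.
Import numFieldNormedType.Exports.
Local Open Scope ring_scope.

Section Iter.
Variables (R : realType) (V : finType).
Variables (P : V -> V -> R) (B : pred V) (b : V -> R).
Hypothesis P0 : forall x y, ~~ B x -> 0 <= P x y.
Hypothesis P1 : forall x, ~~ B x -> \sum_y P x y = 1.
Hypothesis b01 : forall x, B x -> 0 <= b x <= 1.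

Fixpoint itu (n : nat) (x : V) : R :=
  match n with
  | 0 => if B x then b x else 0
  | n'.+1 => if B x then b x else \sum_y P x y * itu n' y
  end.

Lemma itu_B n x : B x -> itu n x = b x.
Proof. by case: n => [|n] /= ->. Qed.

Lemma itu_01 n x : 0 <= itu n x <= 1.
Proof.
elim: n x => [|n IH] x /=; case: ifP => Bx; first (by apply: b01);
  [by rewrite lexx ler01| by apply: b01|].
apply/andP; split.
  by apply: sumr_ge0 => y _; apply: mulr_ge0; [apply: P0; rewrite Bx|case/andP: (IH y)].
rewrite -(P1 (negbT Bx)); apply: ler_sum => y _.
rewrite -[leRHS]mulr1; apply: ler_wpM2l; first by apply: P0; rewrite Bx.
by case/andP: (IH y).
Qed.

Lemma itu_S n x : itu n x <= itu n.+1 x.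
Proof.
elim: n x => [|n IH] x /=; case: ifP => Bx //.
  by apply: sumr_ge0 => y _; apply: mulr_ge0; [apply: P0; rewrite Bx|case/andP: (itu_01 0 y)].
apply: ler_sum => y _; apply: ler_wpM2l; first by apply: P0; rewrite Bx.
exact: IH.
Qed.

Lemma itu_nd x : {homo (fun n => itu n x) : n m / (n <= m)%N >-> n <= m}.
Proof. by apply/nondecreasing_seqP => n; apply: itu_S. Qed.

Lemma itu_cvg x : cvgn (fun n => itu n x).
Proof.
apply: nondecreasing_is_cvgn; first exact: itu_nd.
by exists 1 => _ [n _ <-]; case/andP: (itu_01 n x).
Qed.

Definition Lim x := limn (fun n => itu n x).

Lemma itu_le_Lim n x : itu n x <= Lim x.
Proof. have := @nondecreasing_cvgn_le R (fun n => itu n x) (itu_nd x) (@itu_cvg x) n. done. Qed.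

Lemma Lim_01 x : 0 <= Lim x <= 1.
Proof.
apply/andP; split.
  by apply: le_trans (itu_le_Lim 0 x); case/andP: (itu_01 0 x).
apply: limr_le; first exact: itu_cvg.
by near=> n; case/andP: (itu_01 n x).
Unshelve. all: by end_near.
Qed.

Lemma Lim_B x : B x -> Lim x = b x.
Proof.
move=> Bx; apply/eqP; rewrite eq_le; apply/andP; split.
  apply: limr_le; first exact: itu_cvg.
  by near=> n; rewrite itu_B.
by rewrite -(itu_B 0 Bx) itu_le_Lim.
Unshelve. all: by end_near.
Qed.

Lemma Lim_eq x : ~~ B x -> Lim x = \sum_y P x y * Lim y.
Proof.
move=> Bx; apply/eqP; rewrite eq_le; apply/andP; split.
  apply: limr_le; first exact: itu_cvg.
  near=> n; apply: le_trans (itu_S n x) _; rewrite /= (negbTE Bx).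
  apply: ler_sum => y _; apply: ler_wpM2l; first exact: P0.
  exact: itu_le_Lim.
have cv : ((fun n => \sum_y P x y * itu n y) @ \oo --> \sum_y P x y * Lim y)%classic.
  apply: cvg_big => [|y _]; first exact: add_continuous.
  apply: cvgMl_tmp; exact: itu_cvg.
rewrite -(cvg_lim _ cv) //; apply: limr_le; first by apply/cvg_ex; eexists; exact: cv.
near=> n; have := itu_le_Lim n.+1 x; by rewrite /= (negbTE Bx).
Unshelve. all: by end_near.
Qed.

Lemma Lim_sup (g : V -> R) :
  (forall x, 0 <= g x) -> (forall x, B x -> b x <= g x) ->
  (forall x, ~~ B x -> \sum_y P x y * g y <= g x) ->
  forall x, Lim x <= g x.
Proof.
move=> g0 gB gS.
have H : forall n x, itu n x <= g x.
  elim=> [|n IH] x /=; case: ifP => Bx; try exact: gB; first exact: g0.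
  apply: le_trans (gS _ (negbT Bx)); apply: ler_sum => y _.
  by apply: ler_wpM2l; [apply: P0; rewrite Bx|exact: IH].
move=> x; apply: limr_le; first exact: itu_cvg.
by near=> n; apply: H.
Unshelve. all: by end_near.
Qed.

End Iter.

Section Games.
Variables (R : realType) (V : finType).

Lemma sum_ind (a : V) (f : V -> R) : \sum_y (a == y)%:R * f y = f a.
Proof.
rewrite (bigD1 a) //= eqxx mul1r big1 ?addr0 // => y.
by rewrite eq_sym => /negbTE ->; rewrite mul0r.
Qed.

Lemma sum_ind1 (a : V) : \sum_y ((a == y)%:R : R) = 1.
Proof. by rewrite (bigD1 a) //= eqxx big1 ?addr0 // => y; rewrite eq_sym => /negbTE ->. Qed.

Variable K : ssg R V.

Definition okg := (forall x, is_rand (vk K x) ->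
   (forall y, 0 <= gprob K x y) /\ \sum_y gprob K x y = 1) /\
  (forall s, is_sink (vk K s) -> 0 <= sinkval K s <= 1).

Hypothesis ok : okg.

Definition issink x := is_sink (vk K x).

Lemma trans_ge0 s t x y : 0 <= trans K s t x y.
Proof.
rewrite /trans; case E: (vk K x) => //; try exact: ler0n.
by case: ok => /(_ x) []; rewrite ?E.
Qed.

Lemma trans_sum1 s t x : \sum_y trans K s t x y = 1.
Proof.
rewrite /trans; case E: (vk K x); try exact: sum_ind1.
by case: ok => /(_ x) []; rewrite ?E.
Qed.

Lemma hval_itu s t n x : hval K s t n x =
  itu (trans K s t) issink (sinkval K) n x.
Proof. by elim: n x => [|n IH] x //=; rewrite /issink; case: ifP => // _; apply: eq_bigr => y _; rewrite IH. Qed.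

Lemma vals_Lim s t x : vals K s t x = Lim (trans K s t) issink (sinkval K) x.
Proof. rewrite /vals /Lim; suff -> : (fun n => hval K s t n x) = (fun n => itu (trans K s t) issink (sinkval K) n x) by []; apply: funext => n; exact: hval_itu. Qed.

Lemma rprob_itu s t T n x : rprob K s t T n x =
  itu (trans K s t) (mem T) (fun=> 1) n x.
Proof.
elim: n x => [|n IH] x /=; first by case: (x \in T).
by case: ifP => // _; apply: eq_bigr => y _; rewrite IH.
Qed.

Lemma reach_Lim s t T x : reach_prob K s t T x = Lim (trans K s t) (mem T) (fun=> 1) x.
Proof. rewrite /reach_prob /Lim; suff -> : (fun n => rprob K s t T n x) = (fun n => itu (trans K s t) (mem T) (fun=> 1) n x) by []; apply: funext => n; exact: rprob_itu. Qed.

Section Vals.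
Variables s t : {ffun V -> V}.
Let P0 x y (_ : ~~ issink x) : 0 <= trans K s t x y := trans_ge0 s t x y.
Let P1 x (_ : ~~ issink x) : \sum_y trans K s t x y = 1 := trans_sum1 s t x.
Let b01 x (h : issink x) : 0 <= sinkval K x <= 1 := ok.2 x h.

Lemma vals_01 x : 0 <= vals K s t x <= 1.
Proof. by rewrite vals_Lim; apply: Lim_01. Qed.
Lemma vals_ge0 x : 0 <= vals K s t x.
Proof. by case/andP: (vals_01 x). Qed.
Lemma vals_le1 x : vals K s t x <= 1.
Proof. by case/andP: (vals_01 x). Qed.
Lemma vals_sink x : issink x -> vals K s t x = sinkval K x.
Proof. by rewrite vals_Lim; apply: Lim_B. Qed.
Lemma vals_eq x : ~~ issink x -> vals K s t x = \sum_y trans K s t x y * vals K s t y.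
Proof.
move=> h; rewrite vals_Lim Lim_eq //; apply: eq_bigr => y _; by rewrite vals_Lim.
Qed.
Lemma vals_sup (g : V -> R) :
  (forall x, 0 <= g x) -> (forall x, issink x -> sinkval K x <= g x) ->
  (forall x, ~~ issink x -> \sum_y trans K s t x y * g y <= g x) ->
  forall x, vals K s t x <= g x.
Proof. move=> *; rewrite vals_Lim; exact: Lim_sup. Qed.
End Vals.

Definition closedS s t (S : {set V}) :=
  forall x y, x \in S -> trans K s t x y != 0 -> y \in S.
Definition sfree (S : {set V}) := forall x, x \in S -> ~~ issink x.

Lemma sum_ge_term (f : V -> R) y : (forall z, 0 <= f z) -> f y <= \sum_z f z.
Proof.
move=> f0; rewrite (bigD1 y) //= lerDl; exact: sumr_ge0.
Qed.

Lemma abs_closed s t Z : absorbing K s t Z -> closedS s t Z /\ sfree Z.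
Proof.
case/andP=> /fintype.subsetP sub /forall_inP H; split; last first.
  by move=> x /sub; rewrite !inE.
move=> x y xZ txy; apply/negPn/negP => yZ.
have := H x xZ; rewrite reach_Lim => /eqP L0.
have P0 : forall x y, ~~ (x \in ~: Z) -> 0 <= trans K s t x y by move=> *; exact: trans_ge0.
have P1 : forall x, ~~ (x \in ~: Z) -> \sum_y trans K s t x y = 1 by move=> *; exact: trans_sum1.
have b01 : forall x, x \in ~: Z -> 0 <= (fun=> 1 : R) x <= 1 by move=> *; rewrite ler01 lexx.
have := itu_le_Lim P0 P1 b01 1 x; rewrite L0 /= inE xZ /=.
have : trans K s t x y * itu (trans K s t) (mem (~: Z)) (fun=> 1) 0 y <=
   \sum_z trans K s t x z * itu (trans K s t) (mem (~: Z)) (fun=> 1) 0 z.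
  apply: sum_ge_term => z.
  by apply: mulr_ge0; [exact: trans_ge0| case/andP: (itu_01 P0 P1 b01 0 z)].
rewrite /= inE yZ mulr1 => h1 h2.
have : trans K s t x y <= 0 by exact: le_trans h1 h2.
by rewrite le_eqVlt (negbTE txy) /= ltNge trans_ge0.
Qed.

Lemma closed_abs s t Z : closedS s t Z -> sfree Z -> absorbing K s t Z.
Proof.
move=> cl sf; apply/andP; split.
  by apply/fintype.subsetP => x /sf; rewrite !inE.
apply/forall_inP => x xZ; rewrite reach_Lim.
have P0 : forall x y, ~~ (x \in ~: Z) -> 0 <= trans K s t x y by move=> *; exact: trans_ge0.
have P1 : forall x, ~~ (x \in ~: Z) -> \sum_y trans K s t x y = 1 by move=> *; exact: trans_sum1.
have b01 : forall x, x \in ~: Z -> 0 <= (fun=> 1 : R) x <= 1 by move=> *; rewrite ler01 lexx.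
have h := Lim_sup P0 P1 b01 (g := fun y => (y \notin Z)%:R).
rewrite eq_le; apply/andP; split; last by case/andP: (Lim_01 P0 P1 b01 x).
apply: le_trans (h _ _ _ x) _; last by rewrite xZ.
- by move=> y; exact: ler0n.
- by move=> y; rewrite inE => ->.
- move=> y; rewrite inE negbK => yZ; rewrite yZ big1 // => z _.
  have [->|tz] := eqVneq (trans K s t y z) 0; first by rewrite mul0r.
  by rewrite (cl _ _ yZ tz) mulr0.
Qed.

Lemma ZstP s t x : reflect (exists2 Z, absorbing K s t Z & x \in Z) (x \in Zst K s t).
Proof.
apply: (iffP finset.bigcupP) => [[Z h xZ]|[Z h xZ]]; by exists Z.
Qed.

Lemma Zst_closed s t : closedS s t (Zst K s t).
Proof.
move=> x y /ZstP [Z aZ xZ] txy; apply/ZstP; exists Z => //.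
by case: (abs_closed aZ) => cl _; exact: cl xZ txy.
Qed.

Lemma Zst_sfree s t : sfree (Zst K s t).
Proof. by move=> x /ZstP [Z aZ xZ]; case: (abs_closed aZ) => _; apply. Qed.

Lemma sub_Zst s t S : closedS s t S -> sfree S -> S \subset Zst K s t.
Proof.
move=> cl sf; apply/fintype.subsetP => x xS; apply/ZstP; exists S => //; exact: closed_abs.
Qed.

Lemma vals_trap s t S : closedS s t S -> sfree S -> forall x, x \in S -> vals K s t x = 0.
Proof.
move=> cl sf x xS; apply/eqP; rewrite eq_le vals_ge0 andbT.
apply: le_trans (vals_sup (g := fun y => (y \notin S)%:R) _ _ _ x) _; last by rewrite xS.
- by move=> y; exact: ler0n.
- move=> y ys; case: (boolP (y \in S)) => yS; first by move: (sf _ yS); rewrite ys.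
  by case/andP: (ok.2 y ys).
- move=> y _; case: (boolP (y \in S)) => yS /=.
    rewrite big1 // => z _.
    have [->|tz] := eqVneq (trans K s t y z) 0; first by rewrite mul0r.
    by rewrite (cl _ _ yS tz) mulr0.
  apply: le_trans (_ : _ <= \sum_z trans K s t y z) _; last by rewrite trans_sum1.
  apply: ler_sum => z _; rewrite -[leRHS]mulr1; apply: ler_wpM2l; first exact: trans_ge0.
  by case: (z \in S); rewrite /= ?ler01 ?lexx.
Qed.

End Games.

Section BR.
Variables (R : realType) (V : finType) (K : ssg R V).
Hypothesis ok : okg K.
Hypothesis minarc : forall x, is_min (vk K x) -> exists y, garc K x y.

Lemma trans_congr (s t t' : {ffun V -> V}) y : t y = t' y -> trans K s t y =1 trans K s t' y.
Proof. by move=> e w; rewrite /trans e. Qed.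

Lemma trans_nmin (s t t' : {ffun V -> V}) y : ~~ is_min (vk K y) -> trans K s t y =1 trans K s t' y.
Proof. by rewrite /trans; case: (vk K y). Qed.

Lemma trans_min (s t : {ffun V -> V}) y : is_min (vk K y) -> trans K s t y =1 fun w => (t y == w)%:R.
Proof. by rewrite /trans; case: (vk K y). Qed.

Lemma trans_max (s t : {ffun V -> V}) y : is_max (vk K y) -> trans K s t y =1 fun w => (s y == w)%:R.
Proof. by rewrite /trans; case: (vk K y). Qed.

Lemma min_not_sink x : is_min (vk K x) -> ~~ issink K x.
Proof. by rewrite /issink; case: (vk K x). Qed.

Definition upd (t : {ffun V -> V}) x z : {ffun V -> V} :=
  [ffun y => if y == x then z else t y].

Lemma sum_lt (f g : V -> R) x : (forall y, f y <= g y) -> f x < g x ->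
  \sum_y f y < \sum_y g y.
Proof.
move=> fg fx; rewrite (bigD1 x) //= [X in _ < X](bigD1 x) //=.
by apply: ltr_leD => //; apply: ler_sum => y _.
Qed.

Lemma switch (s t : {ffun V -> V}) x z : min_strategy K t -> is_min (vk K x) -> garc K x z ->
  vals K s t z < vals K s t x ->
  [/\ min_strategy K (upd t x z),
      forall y, vals K s (upd t x z) y <= vals K s t y &
      vals K s (upd t x z) x < vals K s t x].
Proof.
move=> mt mx axz lt.
have zx : z != x by apply/eqP => e; move: lt; rewrite e ltxx.
have mu : min_strategy K (upd t x z).
  apply/forallP => y; apply/implyP => my; rewrite ffunE.
  case: eqP => [->//|_]; by move/forallP: mt => /(_ y) /implyP; apply.
pose g y := if y == x then vals K s t z else vals K s t y.
have gle : forall y, g y <= vals K s t y.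
  by move=> y; rewrite /g; case: eqP => [->|]; [exact: ltW|].
have H := vals_sup ok (s := s) (t := upd t x z) (g := g).
have H' : forall y, vals K s (upd t x z) y <= g y.
  apply: H.
  - by move=> y; rewrite /g; case: ifP => _; apply: vals_ge0.
  - move=> y ys; rewrite /g; case: eqP => [e|_]; first by move: (min_not_sink mx); rewrite -e ys.
    by rewrite vals_sink.
  - move=> y ys; case: (eqVneq y x) => [->|yx].
      rewrite (eq_bigr _ (fun w _ => congr1 (fun u => u * g w) (trans_min s (upd t x z) mx w))).
      by rewrite sum_ind ffunE eqxx /g (negbTE zx) eqxx.
    rewrite (eq_bigr _ (fun w _ => congr1 (fun u => u * g w)
       (trans_congr s (t := upd t x z) (t' := t) (y := y) _ w))); last by rewrite ffunE (negbTE yx).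
    rewrite /g (negbTE yx) [leRHS](vals_eq ok) //; apply: ler_sum => w _.
    by apply: ler_wpM2l; [exact: trans_ge0| exact: gle].
split => // [y|]; first exact: le_trans (H' y) (gle y).
by apply: le_lt_trans (H' x) _; rewrite /g eqxx.
Qed.

Lemma BR_min (s t : {ffun V -> V}) x z : best_response K s t -> is_min (vk K x) ->
  garc K x z -> vals K s t x <= vals K s t z.
Proof.
case/andP=> mt /forallP br mx axz; rewrite leNgt; apply/negP => lt.
have [mu _ lt2] := switch mt mx axz lt.
move: (br (upd t x z)); rewrite mu /= => /forallP /(_ x).
by rewrite leNgt lt2.
Qed.

Lemma min_exists : exists t, min_strategy K t.
Proof.
exists [ffun x => if [pick y | garc K x y] is Some y then y else x].
apply/forallP => x; apply/implyP => mx; rewrite ffunE.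
case: pickP => [y //|none]; case: (minarc mx) => y a.
by move: (none y); rewrite a.
Qed.

Lemma nmin_eq (s t : {ffun V -> V}) y : ~~ issink K y -> ~~ is_min (vk K y) ->
  forall t', vals K s t y = \sum_w trans K s t' y w * vals K s t w.
Proof.
move=> ys my t'; rewrite (vals_eq ok) //; apply: eq_bigr => w _.
by rewrite (trans_nmin s t t' my).
Qed.

Lemma BR_exists (s : {ffun V -> V}) : exists t, best_response K s t.
Proof.
have [t0 m0] := min_exists.
pose F t := \sum_x vals K s t x.
case: (@arg_minP _ _ _ t0 (fun t => min_strategy K t) F m0) => ts ms tsmin.
have bell : forall x z, is_min (vk K x) -> garc K x z -> vals K s ts x <= vals K s ts z.
  move=> x z mx axz; rewrite leNgt; apply/negP => lt.
  have [mu le lt2] := switch ms mx axz lt.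
  have := tsmin _ mu; rewrite leNgt => /negP; apply.
  exact: (sum_lt le lt2).
have trap : forall t, min_strategy K t -> forall S, closedS K s t S -> sfree K S ->
    forall x, x \in S -> vals K s ts x = 0.
  move=> t mt S cl sf x xS; apply/eqP; rewrite eq_le vals_ge0 // andbT.
  rewrite leNgt; apply/negP => pos.
  pose t3 : {ffun V -> V} := [ffun y => if y \in S then t y else ts y].
  have m3 : min_strategy K t3.
    apply/forallP => y; apply/implyP => my; rewrite ffunE.
    case: ifP => _; [move/forallP: mt|move/forallP: ms] => /(_ y) /implyP; exact.
  pose g y := if y \in S then 0 else vals K s ts y.
  have gle : forall y, g y <= vals K s ts y.
    by move=> y; rewrite /g; case: ifP => _ //; apply: vals_ge0.
  have H : forall y, vals K s t3 y <= g y.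
    apply: vals_sup => //.
    - by move=> y; rewrite /g; case: ifP => _ //; apply: vals_ge0.
    - move=> y ys; rewrite /g; case: ifP => yS; first by move: (sf _ yS); rewrite ys.
      by rewrite vals_sink.
    - move=> y ys; rewrite /g; case: ifP => yS.
        rewrite big1 // => w _.
        have e : t3 y = t y by rewrite ffunE yS.
        rewrite (trans_congr s e).
        have [->|tz] := eqVneq (trans K s t y w) 0; first by rewrite mul0r.
        by rewrite (cl _ _ yS tz) mulr0.
      have e : t3 y = ts y by rewrite ffunE yS.
      rewrite [leRHS](vals_eq ok) //; apply: ler_sum => w _.
      rewrite (trans_congr s e); apply: ler_wpM2l; [exact: trans_ge0|].
      by case: ifP => _ //; apply: vals_ge0.
  have := tsmin _ m3; rewrite leNgt => /negP; apply.
  apply: sum_lt => [y|]; first exact: le_trans (H y) (gle y).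
  by apply: le_lt_trans (H x) _; rewrite /g xS.
exists ts; apply/andP; split => //.
apply/forallP => t; apply/implyP => mt; apply/forallP => x.
pose d y := vals K s ts y - vals K s t y.
case: (@arg_maxP _ _ _ x predT d isT) => xm _ xmax.
set D := d xm.
rewrite -subr_le0; apply: le_trans (_ : d x <= D) _; first exact: xmax.
rewrite leNgt; apply/negP => Dpos.
pose X := [set y | d y == D].
have sinkd : forall y, issink K y -> d y = 0 by move=> y ys; rewrite /d !vals_sink // subrr.
have sfX : sfree K X.
  by move=> y; rewrite inE => /eqP dy; apply/negP => ys; move: Dpos; rewrite -dy sinkd // ltxx.
have clX : closedS K s t X.
  move=> y w; rewrite inE => /eqP dy tyw.
  have ys := sfX y; rewrite inE dy eqxx in ys; have {}ys := ys isT.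
  have le1 : vals K s ts y <= \sum_w trans K s t y w * vals K s ts w.
    case: (boolP (is_min (vk K y))) => my; last by rewrite (@nmin_eq s ts y ys my t).
    rewrite (eq_bigr _ (fun w _ => congr1 (fun u => u * vals K s ts w) (trans_min s t my w))) sum_ind.
    apply: bell => //; by move/forallP: mt => /(_ y) /implyP; apply.
  have le2 : D <= \sum_w trans K s t y w * d w.
    have -> : \sum_w trans K s t y w * d w = \sum_w trans K s t y w * vals K s ts w - \sum_w trans K s t y w * vals K s t w.
      by rewrite -sumrB; apply: eq_bigr => v _; rewrite /d mulrBr.
    by rewrite -dy /d [X in _ - X](vals_eq ok) // lerD2r.
  have h0 : \sum_w trans K s t y w * (D - d w) = 0.
    apply/eqP; rewrite eq_le; apply/andP; split.
      rewrite (eq_bigr (fun w => D * trans K s t y w - trans K s t y w * d w)); last by move=> *; rewrite mulrBr mulrC.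
      by rewrite sumrB -mulr_sumr trans_sum1 // mulr1 subr_le0.
    by apply: sumr_ge0 => v _; apply: mulr_ge0; [exact: trans_ge0| rewrite subr_ge0; exact: xmax].
  have nn : forall v, true -> 0 <= trans K s t y v * (D - d v).
    by move=> v _; apply: mulr_ge0; [exact: trans_ge0| rewrite subr_ge0; exact: xmax].
  have := psumr_eq0P nn h0 (i:=w) isT => /eqP; rewrite mulf_eq0 (negbTE tyw) /= subr_eq0 => /eqP dw.
  by rewrite inE -dw.
have xmX : xm \in X by rewrite inE.
have v0 := trap t mt X clX sfX xm xmX.
by move: Dpos; rewrite /D /d v0 sub0r oppr_gt0 ltNge vals_ge0.
Qed.

Lemma Zmax_exists (s : {ffun V -> V}) : exists t, min_strategy K t &&
  [forall t' : {ffun V -> V}, min_strategy K t' ==> (Zst K s t' \subset Zst K s t)].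
Proof.
have [t0 m0] := min_exists.
case: (arg_maxnP (fun t => #|Zst K s t|) m0) => tm mm tmax.
exists tm; rewrite mm /=; apply/forallP => t; apply/implyP => mt.
pose t3 : {ffun V -> V} := [ffun y => if y \in Zst K s tm then tm y else t y].
have m3 : min_strategy K t3.
  apply/forallP => y; apply/implyP => my; rewrite ffunE.
  case: ifP => _; [move/forallP: mm|move/forallP: mt] => /(_ y) /implyP; exact.
pose S := Zst K s tm :|: Zst K s t.
have clS : closedS K s t3 S.
  move=> y w; rewrite inE; case: (boolP (y \in Zst K s tm)) => [yZ _|yZ /= yZ'].
    have e : t3 y = tm y by rewrite ffunE yZ.
    rewrite (trans_congr s e) => tyw; by rewrite inE (Zst_closed ok yZ tyw).
  have e : t3 y = t y by rewrite ffunE (negbTE yZ).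
  rewrite (trans_congr s e) => tyw; by rewrite inE (Zst_closed ok yZ' tyw) orbT.
have sfS : sfree K S by move=> y; rewrite inE => /orP [] /(Zst_sfree ok).
have sub := sub_Zst ok clS sfS.
have c1 : (#|S| <= #|Zst K s tm|)%N by apply: leq_trans (subset_leq_card sub) (tmax _ m3).
have sub2 : Zst K s tm \subset S by apply/fintype.subsetP => y yZ; rewrite inE yZ.
have /eqP eqS : Zst K s tm == S.
  by rewrite -(subset_leqif_cards sub2) eqn_leq c1 (subset_leq_card sub2).
by rewrite eqS; apply/fintype.subsetP => y yZ; rewrite inE yZ orbT.
Qed.
End BR.

Lemma sig_sum (R : realType) (T : finType) (A : {set T})
   (F : {e : T | e \in A} -> R) :
  \sum_(e : {e : T | e \in A}) F e = \sum_(p : T) oapp F 0 (insub p).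
Proof.
rewrite (bigID (mem A)) /= [X in _ = _ + X]big1 ?addr0; last first.
  by move=> p pA; rewrite insubN.
rewrite (@reindex_omap _ _ _ _ _ (val : {e : T | e \in A} -> T) insub); last by move=> p pA; rewrite insubT.
apply: eq_big => [e|e _]; first by rewrite (valP e) valK eqxx.
by rewrite valK.
Qed.

Section Trans.
Variables (R : realType) (V : finType) (G : ssg R V) (A : {set V * V}) (sigma0 : {ffun V -> V}).
Local Notation H := (transformed G A sigma0).
Local Notation tV := (tV A).
Local Notation sub := {e : V * V | e \in A}.

Definition gA (g : tV -> R) (y w : V) : R :=
  match @insub (V * V) (fun e => e \in A) sub (y, w) with
  | Some e => g (inr e) | None => g (inl w) end.

Lemma liftE (s : {ffun V -> V}) x : lift_strat A s (inl x) =
  match @insub (V * V) (fun e => e \in A) sub (x, s x) with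
  | Some e => inr e | None => inl (s x) end.
Proof. by rewrite ffunE. Qed.

Lemma gA_lift (g : tV -> R) (s : {ffun V -> V}) x : gA g x (s x) = g (lift_strat A s (inl x)).
Proof. by rewrite liftE /gA; case: insubP. Qed.

Lemma ST (s t : {ffun V -> V}) (g : tV -> R) y : ~~ issink G y ->
  \sum_z trans H (lift_strat A s) (lift_strat A t) (inl y) z * g z =
  \sum_w trans G s t y w * gA g y w.
Proof.
rewrite /issink /trans /=; case E: (vk G y) => // _.
- by rewrite !sum_ind gA_lift.
- by rewrite !sum_ind gA_lift.
rewrite big_sumType /=.
pose h1 w := (if (y, w) \in A then 0 else gprob G y w) * g (inl w).
pose h2 w := match @insub (V * V) (fun e => e \in A) sub (y, w) with
             | Some e => gprob G y w * g (inr e) | None => 0 end.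
rewrite [RHS](eq_bigr (fun w => h1 w + h2 w)); last first.
  move=> w _; rewrite /h1 /h2 /gA; case: insubP => [e -> ve|/negbTE ->].
    by rewrite mul0r add0r.
  by rewrite addr0.
rewrite big_split /=; congr (_ + _).
rewrite sig_sum /=.
set Fe := (fun e : sub => _).
have -> : \sum_p oapp Fe 0 (insub p) = \sum_a \sum_w oapp Fe 0 (insub (a, w)).
  by rewrite pair_bigA; apply: eq_bigr => [[a w]] _.
rewrite (bigD1 y) //= [X in _ + X]big1 ?addr0 => [|a ay]; last first.
  apply: big1 => w _; case: insubP => //= e _ ve.
  by rewrite /Fe ve /= (negbTE ay) mul0r.
apply: eq_bigr => w _; rewrite /h2; case: insubP => //= e _ ve.
by rewrite /Fe ve /= eqxx.
Qed.

Lemma trans_rand_H (s t : {ffun tV -> tV}) y z : is_rand (vk G y) ->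
  trans H s t (inl y) z = @tprob R V G A (inl y) z.
Proof. by rewrite /trans /=; case: (vk G y). Qed.

Lemma trans_rand_G (s t : {ffun V -> V}) y z : is_rand (vk G y) ->
  trans G s t y z = gprob G y z.
Proof. by rewrite /trans /=; case: (vk G y). Qed.

Lemma okH : okg G -> (forall x, 0 <= vsig G sigma0 x <= 1) -> okg H.
Proof.
move=> [okr oks] v01; split; last first.
  case=> [x|e] /= xs; [exact: oks xs| exact: v01].
case=> [y|e] //= ry; split.
  move=> z; case: z => [w|e] /=; case: ifP => _ //; by case: (okr y ry) => + _; apply.
have := ST sigma0 sigma0 (fun=> 1) (y := y).
rewrite /issink; case E: (vk G y) ry => // _ /(_ isT).
rewrite (eq_bigr (fun z => @tprob R V G A (inl y) z)); last first.
  by move=> z _; rewrite trans_rand_H ?E // mulr1.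
move=> ->; rewrite /gA (eq_bigr (fun w => gprob G y w)); first by case: (okr y); rewrite ?E.
by move=> w _; rewrite trans_rand_G ?E //; case: insubP => *; rewrite mulr1.
Qed.

Lemma minarcH : (forall x, is_min (vk G x) -> exists y, garc G x y) ->
  forall z, is_min (vk H z) -> exists w, garc H z w.
Proof.
move=> ma [x|e] //= mx; case: (ma x mx) => y axy.
case: (boolP ((x, y) \in A)) => xyA.
  by exists (inr (Sub (x, y) xyA)); rewrite /= eqxx axy.
by exists (inl y); rewrite /= axy xyA.
Qed.

Lemma lift_min (t : {ffun V -> V}) : min_strategy G t -> min_strategy H (lift_strat A t).
Proof.
move/forallP=> mt; apply/forallP => [[x|e]]; apply/implyP => //= mx.
have := mt x; rewrite mx /= => axt.
rewrite liftE; case: insubP => [e _ ve|nA] /=; first by rewrite ve /= eqxx axt.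
by rewrite axt nA.
Qed.

Lemma lift_inj (s s' : {ffun V -> V}) x :
  lift_strat A s (inl x) = lift_strat A s' (inl x) -> s x = s' x.
Proof.
rewrite !liftE; case: insubP => [e _ ve|_]; case: insubP => [e' _ ve'|_] //.
  by case=> ee; move: ve ve'; rewrite ee => -> [].
by case.
Qed.

Definition projH (tH : {ffun tV -> tV}) : {ffun V -> V} :=
  [ffun x => match tH (inl x) with inl w => w | inr e => (val e).2 end].

Lemma projH_min tH : min_strategy H tH -> min_strategy G (projH tH).
Proof.
move/forallP=> mt; apply/forallP => x; apply/implyP => mx.
have := mt (inl x); rewrite /= mx /= ffunE.
by case: (tH (inl x)) => [w /andP [] | e /andP []].
Qed.

Lemma projH_lift tH x : min_strategy H tH -> is_min (vk G x) ->
  lift_strat A (projH tH) (inl x) = tH (inl x).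
Proof.
move/forallP=> mt mx; have := mt (inl x); rewrite /= mx /=.
rewrite liftE ffunE; case E: (tH (inl x)) => [w|e] /=.
  by case/andP=> _ nA; rewrite insubN.
case/andP=> /eqP e1 _; rewrite insubT; first by rewrite -e1 -surjective_pairing (valP e).
move=> h; congr inr; apply: val_inj => /=.
by rewrite -e1 -surjective_pairing.
Qed.
End Trans.

Section Aux.
Variables (R : realType) (V : finType).

Lemma wf_ok (G : ssg R V) : ssg_wf G -> okg G.
Proof.
case=> _ _ _ e4 e5; split => // x rx; case: (e4 x rx) => pos zero s1; split => // y.
by case: (boolP (garc G x y)) => a; [exact: ltW (pos y a)| rewrite zero].
Qed.

Lemma wf_minarc (G : ssg R V) : ssg_wf G -> forall x, is_min (vk G x) -> exists y, garc G x y.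
Proof. by case=> _ e2 _ _ _ x mx; apply: e2; move: mx; case: (vk G x). Qed.

Lemma vsig_01 (K : ssg R V) : okg K -> forall s x, 0 <= vsig K s x <= 1.
Proof.
move=> ok s x; rewrite /vsig; case: pickP => [t _|_]; first exact: vals_01.
by rewrite lexx ler01.
Qed.

Lemma vsig_BR (K : ssg R V) : okg K -> (forall x, is_min (vk K x) -> exists y, garc K x y) ->
  forall s, exists t, best_response K s t /\ forall x, vsig K s x = vals K s t x.
Proof.
move=> ok ma s; rewrite /vsig; case: pickP => [t bt|none]; first by exists t.
have [t bt] := BR_exists ok ma s; by move: (none t); rewrite bt.
Qed.

Lemma br_le (K : ssg R V) (s t t' : {ffun V -> V}) : best_response K s t ->
  min_strategy K t' -> forall x, vals K s t x <= vals K s t' x.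
Proof.
case/andP=> _ /forallP /(_ t') /implyP h mt' x.
by have /forallP := h mt'; apply.
Qed.

Lemma trans_congr_s (K : ssg R V) (s s' t : {ffun V -> V}) y : s y = s' y ->
  trans K s t y =1 trans K s' t y.
Proof. by move=> e w; rewrite /trans e. Qed.

Lemma trans_nmax (K : ssg R V) (s s' t : {ffun V -> V}) y : ~~ is_max (vk K y) ->
  trans K s t y =1 trans K s' t y.
Proof. by rewrite /trans; case: (vk K y). Qed.
End Aux.

Unset Implicit Arguments.

Theorem proposition21 (R : realType) (V : finType) (G : ssg R V)
    (A : {set V * V}) (sigma sigma' : {ffun V -> V}) :
  ssg_wf G -> ssg_rational G ->
  A \subset [set e | garc G e.1 e.2] ->
  max_strategy G sigma -> max_strategy G sigma' ->
  succ_transformed G A sigma sigma' ->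
  (Zsig G sigma' \subset Zsig G sigma)%SET.
Proof.
move=> wf _ _ ms ms' [le_ab _ eqimp].
have okG := wf_ok wf; have maG := wf_minarc wf.
have v01 := vsig_01 okG sigma.
have okh := okH A okG v01.
have mah := minarcH (A := A) (sigma0 := sigma) maG.
rewrite {1}/Zsig; case: pickP => [tp /andP [mtp maxtp]|_]; last by rewrite finset.sub0set.
set W := Zst G sigma' tp.
rewrite /Zsig; case: pickP => [t0 /andP [mt0 maxt0]|none]; last first.
  by have [t h] := Zmax_exists okG maG sigma; move: (none t); rewrite h.
apply: fintype.subset_trans (_ : W \subset Zst G sigma tp) _; last first.
  by move/forallP: maxt0 => /(_ tp) /implyP; apply.
have clW : closedS G sigma' tp W := Zst_closed okG (s := sigma') (t := tp).
have sfW : sfree G W := Zst_sfree okG (s := sigma') (t := tp).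
have [tb [brb vb]] := vsig_BR okG maG sigma.
have [ta [bra va]] := vsig_BR okh mah (lift_strat A sigma').
have [tc [brc vc]] := vsig_BR okh mah (lift_strat A sigma).
pose v := vsig G sigma.
pose a := vsig (transformed G A sigma) (lift_strat A sigma').
pose b := vsig (transformed G A sigma) (lift_strat A sigma).
have upper : forall M, 0 <= M -> M <= 1 -> (forall u, u \in W -> v u <= M) ->
    forall y, y \in W -> a (inl y) <= M.
  move=> M M0 M1 vM y yW; rewrite /a va.
  apply: le_trans (br_le bra (@lift_min _ _ G A sigma tp mtp) (inl y)) _.
  pose g (z : tV A) := match z with inl w => if w \in W then M else 1 | inr e => v (val e).2 end.
  have := vals_sup okh (s := lift_strat A sigma') (t := lift_strat A tp) (g := g).
  move=> /(_ _ _ _ (inl y)); rewrite /= yW; apply.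
  - case=> [w|e] /=; [by case: ifP => _ //; exact: ler01 | by case/andP: (v01 (val e).2)].
  - case=> [w|e] /= ws; last by rewrite lexx.
    case: ifP => wW; first by case/negP: (sfW w wW); exact: ws.
    by case/andP: (okG.2 w ws).
  - case=> [w|e] /= ws //.
    rewrite (@ST _ _ G A sigma sigma' tp g w ws).
    case: ifP => wW.
      apply: le_trans (_ : \sum_u trans G sigma' tp w u * M <= _); last by rewrite -mulr_suml trans_sum1 // mul1r.
      apply: ler_sum => u _; case: (eqVneq (trans G sigma' tp w u) 0) => [->|tu]; first by rewrite !mul0r.
      have uW := clW _ _ wW tu.
      apply: ler_wpM2l; first exact: trans_ge0.
      rewrite /gA; case: insubP => [e _ ve|_] /=; last by rewrite uW.
      by rewrite ve; exact: vM.
    apply: le_trans (_ : \sum_u trans G sigma' tp w u * 1 <= _); last by rewrite -mulr_suml trans_sum1 // mul1r.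
    apply: ler_sum => u _; apply: ler_wpM2l; first exact: trans_ge0.
    rewrite /gA; case: insubP => [e _ ve|_] /=; first by case/andP: (v01 (val e).2).
    by case: ifP.
have step1 : forall y, b (inl y) <= v y.
  move=> y; rewrite /b vc.
  have mtb : min_strategy G tb by case/andP: brb.
  apply: le_trans (br_le brc (@lift_min _ _ G A sigma tb mtb) (inl y)) _.
  pose g (z : tV A) := match z with inl w => v w | inr e => v (val e).2 end.
  have := vals_sup okh (s := lift_strat A sigma) (t := lift_strat A tb) (g := g).
  move=> /(_ _ _ _ (inl y)); apply.
  - by case=> [w|e] /=; [case/andP: (v01 w) | case/andP: (v01 (val e).2)].
  - case=> [w|e] /= ws; last by rewrite lexx.
    by rewrite /v vb vals_sink.
  - case=> [w|e] /= ws //.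
    rewrite (@ST _ _ G A sigma sigma tb g w ws) /v vb [leRHS](vals_eq okG) //.
    apply: ler_sum => u _; apply: ler_wpM2l; first exact: trans_ge0.
    rewrite /gA; case: insubP => [e _ ve|_] /=; last by rewrite /v vb.
    by rewrite ve /v vb.
have LB : forall y, v y <= b (inl y).
  move=> y.
  have mc : min_strategy (transformed G A sigma) tc by case/andP: brc.
  pose tG := projH tc.
  have mG : min_strategy G tG := @projH_min _ _ G A sigma tc mc.
  rewrite /v vb; apply: le_trans (br_le brb mG y) _.
  have := vals_sup okG (s := sigma) (t := tG) (g := fun w => b (inl w)); apply.
  - by move=> w; case/andP: (vsig_01 okh (lift_strat A sigma) (inl w)).
  - by move=> w ws; rewrite /b vc vals_sink.
  - move=> w ws.
    apply: le_trans (_ : \sum_u trans G sigma tG w u * gA b w u <= _).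
      apply: ler_sum => u _; apply: ler_wpM2l; first exact: trans_ge0.
      rewrite /gA; case: insubP => [e _ ve|_] //=.
      rewrite [X in _ <= X]/b vc vals_sink //=; rewrite ve; exact: step1 u.
    have bq : b (inl w) = \sum_z trans (transformed G A sigma) (lift_strat A sigma) tc (inl w) z * b z.
      by rewrite /b vc (vals_eq okh) //; apply: eq_bigr => z _; rewrite vc.
    rewrite -(@ST _ _ G A sigma sigma tG b w ws) [leRHS]bq.
    apply: ler_sum => z _; rewrite le_eqVlt; apply/orP; left; apply/eqP; congr (_ * _).
    case: (boolP (is_min (vk G w))) => mw.
      by apply: trans_congr; rewrite (@projH_lift _ _ G A sigma tc w mc mw).
    exact: trans_nmin.
have mtp' : forall y, is_min (vk G y) -> garc G y (tp y).
  by move=> y my; move/forallP: mtp => /(_ y) /implyP; apply.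
have K1 : forall y0, y0 \in W -> v y0 = 0.
  move=> y0 y0W.
  case: (@arg_maxP _ _ _ y0 (mem W) v y0W) => ym ymW ymax.
  pose M := v ym.
  have M0 : 0 <= M by case/andP: (v01 ym).
  have M1 : M <= 1 by case/andP: (v01 ym).
  have vM : forall u, u \in W -> v u <= M by move=> u uW; exact: ymax.
  pose S := [set y in W | v y == M].
  have clS : closedS G sigma tp S.
    move=> y w; rewrite inE => /andP [yW /eqP vy] tyw.
    have ys := sfW y yW.
    have eqs : is_max (vk G y) -> sigma y = sigma' y.
      move=> my; symmetry; apply: (@lift_inj _ A); apply: eqimp => //.
      apply/eqP; rewrite eq_le le_ab andbT.
      apply: le_trans (upper M M0 M1 vM y yW) _.
      by rewrite -vy; exact: LB.
    have inW : forall u, trans G sigma tp y u != 0 -> u \in W.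
      move=> u tu; apply: (clW y u yW).
      case: (boolP (is_max (vk G y))) => my.
        by rewrite (@trans_congr_s _ _ G sigma' sigma tp y (esym (eqs my)) u).
      by rewrite (@trans_nmax _ _ G sigma' sigma tp y my u).
    rewrite inE (inW w tyw) /= eq_le (vM w (inW w tyw)) /= -vy.
    case: (boolP (is_min (vk G y))) => miny.
      move: tyw; rewrite (@trans_min _ _ G sigma tp y miny w) pnatr_eq0 eqb0 negbK => /eqP <-.
      rewrite /v !vb; apply: (BR_min okG) => //; exact: mtp'.
    have avg : v y = \sum_u trans G sigma tp y u * v u.
      by rewrite /v vb (vals_eq okG) //; apply: eq_bigr => u _; rewrite (@trans_nmin _ _ G sigma tb tp y miny u) -vb.
    have h0 : \sum_u trans G sigma tp y u * (M - v u) = 0.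
      rewrite (eq_bigr (fun u => M * trans G sigma tp y u - trans G sigma tp y u * v u)); last first.
        by move=> u _; rewrite mulrBr mulrC.
      by rewrite sumrB -mulr_sumr trans_sum1 // mulr1 -avg vy subrr.
    have nn : forall u, true -> 0 <= trans G sigma tp y u * (M - v u).
      move=> u _; case: (eqVneq (trans G sigma tp y u) 0) => [->|tu]; first by rewrite mul0r.
      by apply: mulr_ge0; [exact: trans_ge0| rewrite subr_ge0; exact: vM (inW u tu)].
    have := psumr_eq0P nn h0 (i := w) isT => /eqP; rewrite mulf_eq0 (negbTE tyw) /= subr_eq0.
    by move=> /eqP <-; rewrite vy.
  have sfS : sfree G S by move=> y; rewrite inE => /andP [yW _]; exact: sfW.
  have ymS : ym \in S by rewrite inE (ymW : ym \in W) /=.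
  have z0 := vals_trap okG clS sfS ymS.
  have Mle : M <= 0 by rewrite -z0 /M /v vb; exact: br_le brb mtp ym.
  apply/eqP; rewrite eq_le; apply/andP; split; last by case/andP: (v01 y0).
  exact: le_trans (vM y0 y0W) Mle.
apply: (sub_Zst okG) => //.
move=> x y xW txy.
case: (boolP (is_max (vk G x))) => mx; last by apply: (clW x y xW); rewrite (@trans_nmax _ _ G sigma' sigma tp x mx y).
have ex : sigma x = sigma' x.
  symmetry; apply: (@lift_inj _ A); apply: eqimp => //.
  apply/eqP; rewrite eq_le le_ab andbT.
  apply: le_trans (upper 0 (lexx 0) ler01 _ x xW) _.
    by move=> u uW; rewrite K1.
  by case/andP: (vsig_01 okh (lift_strat A sigma) (inl x)).
by apply: (clW x y xW); rewrite (@trans_congr_s _ _ G sigma' sigma tp x (esym ex) y).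
Qed.
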